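(* Let $p$ be a prime and let $\mathcal{S}$ be an infinite abelian group of exponent $p$ (i.e. $pg=0$ for all $g$), in the signature $(+,-,0)$. Let $I$ be the set of finite subgroups of $\mathcal{S}$, ordered by inclusion. Then $\lim_I\mathrm{Th}(A^* )=\mathrm{Th}(\mathcal{S}^* )$, where $A$ ranges over $I$.
   Context: For a structure $\mathcal{T}$ with universe $T$, $\mathrm{Th}(\mathcal{T}^* )$ is the set of sentences in $(+,-,0)$ expanded by a constant for each element of $T$ that are true in $\mathcal{T}$; these are regarded as subsets of the set of sentences with constants from the universe of $\mathcal{S}$. For a family $\{\Delta_i\}_{i\in I}$ indexed by a directed set: $\limsup_I \Delta_i=\{\theta: \forall i\ \exists j\ge i\ [\theta\in\Delta_j]\}$, $\liminf_I \Delta_i=\{\theta: \exists i\ \forall j\ge i\ [\theta\in\Delta_j]\}$, and $\lim_I\Delta_i=\Delta$ means both equal $\Delta$. *)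

(* Defs.v *)
From HB Require Import structures.
From mathcomp Require Import all_boot all_order all_algebra.
From Stdlib Require Import List.
Set Implicit Arguments. Unset Strict Implicit. Unset Printing Implicit Defensive.
Import GRing.Theory.
Local Open Scope ring_scope.

Inductive term (G : Type) : Type :=
| TVar : nat -> term G
| TConst : G -> term G
| TZero : term G
| TAdd : term G -> term G -> term G
| TNeg : term G -> term G.

Inductive formula (G : Type) : Type :=
| FEq : term G -> term G -> formula G
| FBot : formula G
| FNot : formula G -> formula G
| FAnd : formula G -> formula G -> formula G
| FOr : formula G -> formula G -> formula G
| FImp : formula G -> formula G -> formula G
| FAll : nat -> formula G -> formula G
| FEx : nat -> formula G -> formula G.

Arguments TZero {G}. Arguments FBot {G}.

Section Semantics.
Variable G : zmodType.

Fixpoint teval (e : nat -> G) (t : term G) : G :=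
  match t with
  | TVar n => e n
  | TConst g => g
  | TZero => 0
  | TAdd t1 t2 => teval e t1 + teval e t2
  | TNeg t1 => - teval e t1
  end.

Definition upd (e : nat -> G) (n : nat) (x : G) : nat -> G :=
  fun m => if m == n then x else e m.

(* Satisfaction in the substructure with universe A (quantifiers range over A). *)
Fixpoint sat (A : G -> Prop) (e : nat -> G) (f : formula G) : Prop :=
  match f with
  | FEq t1 t2 => teval e t1 = teval e t2
  | FBot => False
  | FNot f1 => ~ sat A e f1
  | FAnd f1 f2 => sat A e f1 /\ sat A e f2
  | FOr f1 f2 => sat A e f1 \/ sat A e f2
  | FImp f1 f2 => sat A e f1 -> sat A e f2
  | FAll n f1 => forall x, A x -> sat A (upd e n x) f1
  | FEx n f1 => exists x, A x /\ sat A (upd e n x) f1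
  end.

Fixpoint tvar_in (n : nat) (t : term G) : Prop :=
  match t with
  | TVar m => m = n
  | TConst _ => False
  | TZero => False
  | TAdd t1 t2 => tvar_in n t1 \/ tvar_in n t2
  | TNeg t1 => tvar_in n t1
  end.

Fixpoint free_in (n : nat) (f : formula G) : Prop :=
  match f with
  | FEq t1 t2 => tvar_in n t1 \/ tvar_in n t2
  | FBot => False
  | FNot f1 => free_in n f1
  | FAnd f1 f2 => free_in n f1 \/ free_in n f2
  | FOr f1 f2 => free_in n f1 \/ free_in n f2
  | FImp f1 f2 => free_in n f1 \/ free_in n f2
  | FAll m f1 => m <> n /\ free_in n f1
  | FEx m f1 => m <> n /\ free_in n f1
  end.

Definition sentence (f : formula G) : Prop := forall n, ~ free_in n f.

Fixpoint tconsts_in (A : G -> Prop) (t : term G) : Prop :=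
  match t with
  | TVar _ => True
  | TZero => True
  | TConst g => A g
  | TAdd t1 t2 => tconsts_in A t1 /\ tconsts_in A t2
  | TNeg t1 => tconsts_in A t1
  end.

Fixpoint consts_in (A : G -> Prop) (f : formula G) : Prop :=
  match f with
  | FEq t1 t2 => tconsts_in A t1 /\ tconsts_in A t2
  | FBot => True
  | FNot f1 => consts_in A f1
  | FAnd f1 f2 => consts_in A f1 /\ consts_in A f2
  | FOr f1 f2 => consts_in A f1 /\ consts_in A f2
  | FImp f1 f2 => consts_in A f1 /\ consts_in A f2
  | FAll _ f1 => consts_in A f1
  | FEx _ f1 => consts_in A f1
  end.

(* Th(A star): sentences with constants from A true in the substructure A,
   viewed as a set of sentences with constants from G. *)
Definition Th (A : G -> Prop) (f : formula G) : Prop :=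
  sentence f /\ consts_in A f /\ sat A (fun _ => 0) f.

Definition subgroupP (A : G -> Prop) : Prop :=
  A 0 /\ (forall x y, A x -> A y -> A (x + y)) /\ (forall x, A x -> A (- x)).

Definition finiteP (A : G -> Prop) : Prop := exists l : list G, forall x, A x -> In x l.

Definition finsub (A : G -> Prop) : Prop := subgroupP A /\ finiteP A.

Definition incl (A B : G -> Prop) : Prop := forall x, A x -> B x.

Definition limsup_I (Delta : (G -> Prop) -> formula G -> Prop) (f : formula G) : Prop :=
  forall A, finsub A -> exists B, finsub B /\ incl A B /\ Delta B f.

Definition liminf_I (Delta : (G -> Prop) -> formula G -> Prop) (f : formula G) : Prop :=
  exists A, finsub A /\ forall B, finsub B -> incl A B -> Delta B f.

End Semantics.

(* Main.v *)
Require Import Defs.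
From Stdlib Require Import List Classical.
From HB Require Import structures.
From mathcomp Require Import all_boot all_order all_algebra.
From mathcomp Require Import zify.
Set Implicit Arguments. Unset Strict Implicit. Unset Printing Implicit Defensive.
Import GRing.Theory.
Local Open Scope ring_scope.

Lemma In_mem (T : eqType) (x : T) (l : seq T) : In x l <-> x \in l.
Proof.
elim: l => //= y l IH; rewrite in_cons; split.
- by case=> [->|/IH ->]; rewrite ?eqxx ?orbT.
- by case/orP=> [/eqP->|/IH]; auto.
Qed.

Section Main.
Variable p : nat.
Variable S : zmodType.
Hypothesis hp : prime p.
Hypothesis hexp : forall g : S, g *+ p = 0.
Hypothesis hinf : ~ finiteP (fun _ : S => True).

Record core (U1 U2 : S -> Prop) (P : seq (S * S)) : Prop := Core {
  c_sub1 : subgroupP U1;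
  c_sub2 : subgroupP U2;
  c_uniq : uniq P;
  c_zero : (0, 0) \in P;
  c_add : forall a b, a \in P -> b \in P -> (a.1 + b.1, a.2 + b.2) \in P;
  c_fun : forall a b, a \in P -> b \in P -> a.1 = b.1 -> a.2 = b.2;
  c_inj : forall a b, a \in P -> b \in P -> a.2 = b.2 -> a.1 = b.1;
  c_in : forall a, a \in P -> U1 a.1 /\ U2 a.2 }.

Definition room (U : S -> Prop) (P : seq (S * S)) (q : nat) : Prop :=
  (exists L : seq S, uniq L /\ (forall y, y \in L -> U y) /\ (size P * p ^ q <= size L)%N)
  \/ ~ finiteP U.

Definition sw (P : seq (S * S)) := [seq (a.2, a.1) | a <- P].

Lemma mem_sw P a : (a \in sw P) = ((a.2, a.1) \in P).
Proof.
case: a => x y /=.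
have inj : injective (fun a : S * S => (a.2, a.1)) by move=> [? ?] [? ?] [-> ->].
by rewrite -[(x, y)]/((fun a : S * S => (a.2, a.1)) (y, x)) mem_map.
Qed.

Lemma swK P : sw (sw P) = P.
Proof. by elim: P => //= [[a b] P ->]. Qed.

Lemma size_sw P : size (sw P) = size P.
Proof. exact: size_map. Qed.

Lemma room_sw U P q : room U P q -> room U (sw P) q.
Proof. by rewrite /room size_sw. Qed.

Lemma uniq_sw P : uniq P -> uniq (sw P).
Proof.
move=> u; rewrite map_inj_uniq //.
by move=> [? ?] [? ?] [-> ->].
Qed.

Lemma core_sw U1 U2 P : core U1 U2 P -> core U2 U1 (sw P).
Proof.
case=> s1 s2 u z ad fu ij ci; constructor => //.
- exact: uniq_sw.
- by rewrite mem_sw.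
- move=> a b; rewrite !mem_sw => ha hb /=.
  exact: (ad _ _ ha hb).
- by move=> a b; rewrite !mem_sw => ha hb; apply: (ij _ _ ha hb).
- by move=> a b; rewrite !mem_sw => ha hb; apply: (fu _ _ ha hb).
- by move=> a; rewrite mem_sw => /ci [].
Qed.


Lemma p_gt1 : (1 < p)%N. Proof. exact: prime_gt1. Qed.

Lemma mulrn_modp (x : S) n : x *+ n = x *+ (n %% p).
Proof.
by rewrite {1}(divn_eq n p) mulrnDr mulrnA mulrnAC hexp mul0rn add0r.
Qed.

Lemma negE (x : S) : - x = x *+ p.-1.
Proof.
have H : x *+ p.-1 + x = 0 by rewrite -mulrSr prednK ?hexp // prime_gt0.
by rewrite -(addrK x (x *+ p.-1)) H sub0r.
Qed.

Lemma core_muln U1 U2 P a n : core U1 U2 P -> a \in P -> (a.1 *+ n, a.2 *+ n) \in P.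
Proof.
move=> c ha; elim: n => [|n IH]; first by rewrite !mulr0n (c_zero c).
by rewrite !mulrS; apply: (c_add c ha IH).
Qed.

Lemma core_neg U1 U2 P a : core U1 U2 P -> a \in P -> (- a.1, - a.2) \in P.
Proof. by move=> c ha; rewrite !negE; exact: (core_muln _ c ha). Qed.

Lemma core_sub U1 U2 P a b : core U1 U2 P -> a \in P -> b \in P ->
  (a.1 - b.1, a.2 - b.2) \in P.
Proof. by move=> c ha hb; apply: (c_add c ha (core_neg c hb)). Qed.

Lemma sub_muln (U : S -> Prop) (x : S) n : subgroupP U -> U x -> U (x *+ n).
Proof.
case=> h0 [hadd hneg] hx; elim: n => [|n IH]; first by rewrite mulr0n.
by rewrite mulrS; apply: hadd.
Qed.

Lemma indep U1 U2 P x a a' k k' : core U1 U2 P -> (forall b, (x, b) \notin P) ->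
  a \in P -> a' \in P -> (k < p)%N -> (k' < p)%N ->
  a.1 + x *+ k = a'.1 + x *+ k' -> k = k'.
Proof.
move=> c hx.
wlog le : a a' k k' / (k' <= k)%N.
  move=> W ha ha' hk hk' E; case: (leqP k' k) => [l|l].
    exact: (W a a').
  by apply/esym/(W a' a) => //; apply: ltnW.
move=> ha ha' hk hk' E.
have [-> //|ne] := eqVneq k' k.
have lt : (k' < k)%N by rewrite ltn_neqAle ne le.
pose m := (k - k')%N.
have Hm : x *+ m = a'.1 - a.1.
  have : x *+ k = x *+ k' + x *+ m by rewrite -mulrnDr subnKC // ltnW.
  move=> Ek; apply/eqP; rewrite eq_sym subr_eq; apply/eqP; apply: (addIr (x *+ k')).
  by rewrite -E -addrA addrCA [x *+ m + _]addrC -Ek.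
have hm : (x *+ m, a'.2 - a.2) \in P by rewrite Hm; apply: (core_sub c ha' ha).
have m0 : (0 < m)%N by rewrite subn_gt0.
have mp : (m < p)%N by rewrite /m; lia.
have cop : coprime p m.
  by rewrite prime_coprime //; apply/negP => /(dvdn_leq m0); rewrite leqNgt mp.
case: (Bezoutl m (prime_gt0 hp)) => u _; rewrite (eqP cop) => dv.
have Hx : x = - ((x *+ m) *+ u).
  apply/eqP; rewrite -addr_eq0 -mulrnA -mulrS mulrn_modp mulnC -add1n.
  by move: dv; rewrite /dvdn => /eqP ->.
have := core_neg c (core_muln u c hm); rewrite /= -Hx => hin.
by move: (hx (- ((a'.2 - a.2) *+ u))); rewrite hin.
Qed.


Definition span (P : seq (S * S)) (x x' : S) :=
  [seq (a.1 + x *+ k, a.2 + x' *+ k) | a <- P, k <- iota 0 p].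

Lemma span_size P x x' : size (span P x x') = (size P * p)%N.
Proof. by rewrite size_allpairs size_iota. Qed.

Lemma span_sub U1 U2 P x x' : core U1 U2 P -> {subset P <= span P x x'}.
Proof.
move=> c a ha; apply/allpairsP; exists (a, 0%N) => /=; split => //.
  by rewrite mem_iota /= prime_gt0.
by rewrite !mulr0n !addr0; case: a {ha}.
Qed.

Lemma span_x U1 U2 P x x' : core U1 U2 P -> (x, x') \in span P x x'.
Proof.
move=> c; apply/allpairsP; exists ((0, 0), 1%N) => /=; split => //.
  exact: (c_zero c).
  by rewrite mem_iota /= prime_gt1.
by rewrite !mulr1n !add0r.
Qed.

Lemma span_core U1 U2 P x x' : core U1 U2 P -> U1 x -> U2 x' ->
  (forall b, (x, b) \notin P) -> (forall a, (a, x') \notin P) ->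
  core U1 U2 (span P x x').
Proof.
move=> c hx hx' nx nx'.
have nx2 : forall b, (x', b) \notin sw P by move=> b; rewrite mem_sw.
have ind1 : forall a b k j, a \in P -> b \in P -> (k < p)%N -> (j < p)%N ->
    a.1 + x *+ k = b.1 + x *+ j -> k = j /\ a = b.
  move=> a b k j ha hb hk hj E.
  have kj := indep c nx ha hb hk hj E; subst j.
  have e1 : a.1 = b.1 by apply: (addIr (x *+ k)).
  have e2 := c_fun c ha hb e1.
  by split => //; case: a b {ha hb E} e1 e2 => [? ?] [? ?] /= -> ->.
have ind2 : forall a b k j, a \in P -> b \in P -> (k < p)%N -> (j < p)%N ->
    a.2 + x' *+ k = b.2 + x' *+ j -> k = j /\ a = b.
  move=> a b k j ha hb hk hj E.
  have ha' : (a.2, a.1) \in sw P by rewrite mem_sw; case: a {E} ha.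
  have hb' : (b.2, b.1) \in sw P by rewrite mem_sw; case: b {E} hb.
  have kj := indep (core_sw c) (nx2) ha' hb' hk hj E; subst j.
  have e1 : a.2 = b.2 by apply: (addIr (x' *+ k)).
  have e2 := c_inj c ha hb e1.
  by split => //; case: a b {ha hb E ha' hb'} e1 e2 => [? ?] [? ?] /= -> ->.
have [h01 [hadd1 hneg1]] := c_sub1 c.
have [h02 [hadd2 hneg2]] := c_sub2 c.
constructor.
- exact: c_sub1 c.
- exact: c_sub2 c.
- apply: allpairs_uniq; [exact: c_uniq c|exact: iota_uniq|].
  move=> [a k] [b j] /allpairsP [[a0 k0] [/= ha hk [-> ->]]] /allpairsP [[b0 j0] [/= hb hj [-> ->]]] /=.
  case=> E _.
  move: hk hj; rewrite !mem_iota /= => hk hj.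
  by have [-> ->] := ind1 _ _ _ _ ha hb hk hj E.
- exact: span_sub c _ (c_zero c).
- move=> u v /allpairsP [[a k] [/= ha hk ->]] /allpairsP [[b j] [/= hb hj ->]] /=.
  apply/allpairsP; exists ((a.1 + b.1, a.2 + b.2), ((k + j) %% p)%N) => /=; split.
  + by apply: (c_add c).
  + by rewrite mem_iota /= ltn_pmod // prime_gt0.
  + by rewrite -!mulrn_modp !mulrnDr !addrA [_ + x *+ k + b.1]addrAC [_ + x' *+ k + b.2]addrAC.
- move=> u v /allpairsP [[a k] [/= ha hk ->]] /allpairsP [[b j] [/= hb hj ->]] /= E.
  move: hk hj; rewrite !mem_iota /= => hk hj.
  by have [-> ->] := ind1 _ _ _ _ ha hb hk hj E.
- move=> u v /allpairsP [[a k] [/= ha hk ->]] /allpairsP [[b j] [/= hb hj ->]] /= E.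
  move: hk hj; rewrite !mem_iota /= => hk hj.
  by have [-> ->] := ind2 _ _ _ _ ha hb hk hj E.
- move=> u /allpairsP [[a k] [/= ha hk ->]] /=.
  have [u1 u2] := c_in c ha.
  split; [apply: hadd1 => //; exact: sub_muln (c_sub1 c) hx
         |apply: hadd2 => //; exact: sub_muln (c_sub2 c) hx'].
Qed.


Lemma room_mono U P q q' : room U P q -> (q' <= q)%N -> room U P q'.
Proof.
move=> [[L [uL [LU sz]]]|ni] le; last by right.
left; exists L; split => //; split => //; apply: leq_trans sz.
by apply: leq_mul => //; apply: leq_pexp2l => //; apply: prime_gt0.
Qed.

Lemma room_span U P q x x' : room U P q.+1 -> room U (span P x x') q.
Proof.
move=> [[L [uL [LU sz]]]|ni]; last by right.
by left; exists L; split => //; split => //; rewrite span_size -mulnA -expnS.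
Qed.

Lemma pick U1 U2 P q : core U1 U2 P -> room U2 P q.+1 ->
  exists y, U2 y /\ forall a, (a, y) \notin P.
Proof.
move=> c r; apply: NNPP => H.
have H' : forall y, U2 y -> y \in [seq a.2 | a <- P].
  move=> y Uy; apply/mapP; apply: NNPP => nm; apply: H; exists y; split => // a.
  by apply/negP => ha; apply: nm; exists (a, y).
case: r => [[L [uL [LU sz]]]|ni].
- have := uniq_leq_size uL (fun y hy => H' y (LU y hy)); rewrite size_map => le.
  have sP : (0 < size P)%N by move: (c_zero c); case: (P).
  have e : (0 < p ^ q)%N by rewrite expn_gt0 prime_gt0.
  have p1 := prime_gt1 hp.
  move: sz; rewrite expnS => sz.
  have h2 : (2 * 1 <= p * p ^ q)%N by apply: leq_mul.
  have h3 : (size P * 2 <= size P * (p * p ^ q))%N by apply: leq_mul.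
  have h4 : (size P * 2 <= size P * 1)%N by rewrite muln1 (leq_trans h3 (leq_trans sz le)).
  by rewrite leq_pmul2l in h4.
- apply: ni; exists [seq a.2 | a <- P] => y Uy; apply/In_mem; exact: H'.
Qed.

Lemma ext U1 U2 P q x : core U1 U2 P -> room U1 P q.+1 -> room U2 P q.+1 -> U1 x ->
  exists x' P', U2 x' /\ core U1 U2 P' /\ room U1 P' q /\ room U2 P' q /\
    (x, x') \in P' /\ {subset P <= P'}.
Proof.
move=> c r1 r2 hx.
case: (classic (exists b, (x, b) \in P)) => [[b hb]|nb].
  exists b, P; have [_ hb2] := c_in c hb.
  split; first exact: hb2.
  split; first exact: c.
  split; first exact: room_mono r1 (leqnSn _).
  split; first exact: room_mono r2 (leqnSn _).
  by split.
have nb' : forall b, (x, b) \notin P by move=> b; apply/negP => hb; apply: nb; exists b.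
have [x' [hx' nx']] := pick c r2.
exists x', (span P x x'); split => //; split; first exact: span_core.
split; first exact: room_span.
split; first exact: room_span.
split; first exact: span_x c.
exact: span_sub c.
Qed.


Fixpoint qd (f : formula S) : nat :=
  match f with
  | FEq _ _ => 0%N
  | FBot => 0%N
  | FNot g => qd g
  | FAnd g h => maxn (qd g) (qd h)
  | FOr g h => maxn (qd g) (qd h)
  | FImp g h => maxn (qd g) (qd h)
  | FAll _ g => (qd g).+1
  | FEx _ g => (qd g).+1
  end.

Lemma teval_in U1 U2 P (e1 e2 : nat -> S) t : core U1 U2 P ->
  tconsts_in (fun c => (c, c) \in P) t -> (forall v, tvar_in v t -> (e1 v, e2 v) \in P) ->
  (teval e1 t, teval e2 t) \in P.
Proof.
move=> c; elim: t => [n|g|| t1 IH1 t2 IH2|t IH] /= hc hv.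
- exact: hv.
- exact: hc.
- exact: c_zero c.
- case: hc => h1 h2.
  apply: (c_add c (IH1 h1 (fun v h => hv v (or_introl h))) (IH2 h2 (fun v h => hv v (or_intror h)))).
- exact: (core_neg c (IH hc hv)).
Qed.

Lemma tconsts_mono (K K' : S -> Prop) t : (forall c, K c -> K' c) -> tconsts_in K t -> tconsts_in K' t.
Proof. move=> h; elim: t => /= [n|g||t1 IH1 t2 IH2 [? ?]|t IH]; try split; auto. Qed.

Lemma consts_mono (K K' : S -> Prop) f : (forall c, K c -> K' c) -> consts_in K f -> consts_in K' f.
Proof.
move=> h; elim: f => /= [t1 t2 [? ?]| |g IHg|g IHg h' IHh [? ?]|g IHg h' IHh [? ?]|g IHg h' IHh [? ?]|n g IHg|n g IHg];
  try split; eauto using tconsts_mono.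
Qed.

Definition Inv U1 U2 (e1 e2 : nat -> S) P f :=
  core U1 U2 P /\ consts_in (fun c => (c, c) \in P) f /\
  (forall v, free_in v f -> (e1 v, e2 v) \in P) /\ room U1 P (qd f) /\ room U2 P (qd f).

Lemma Inv_sw U1 U2 e1 e2 P f : Inv U1 U2 e1 e2 P f -> Inv U2 U1 e2 e1 (sw P) f.
Proof.
move=> [c [k [fr [r1 r2]]]]; split; first exact: core_sw.
split; first by apply: consts_mono k => x; rewrite mem_sw.
split; first by move=> v hv; rewrite mem_sw; apply: fr.
by split; apply: room_sw.
Qed.

Lemma Inv_mono U1 U2 e1 e2 P f g : Inv U1 U2 e1 e2 P f ->
  consts_in (fun c => (c, c) \in P) g -> (forall v, free_in v g -> free_in v f) ->
  (qd g <= qd f)%N -> Inv U1 U2 e1 e2 P g.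
Proof.
move=> [c [k [fr [r1 r2]]]] kg fg le; split => //; split => //; split.
  by move=> v /fg; apply: fr.
by split; apply: room_mono le.
Qed.

Lemma upd_in (e1 e2 : nat -> S) (P : seq (S * S)) n x x' v g (Q : nat -> formula S -> formula S) :
  (x, x') \in P -> (forall v, free_in v (Q n g) -> (e1 v, e2 v) \in P) ->
  (forall v, free_in v g -> v <> n -> free_in v (Q n g)) ->
  free_in v g -> (upd e1 n x v, upd e2 n x' v) \in P.
Proof.
move=> hx fr hq hv; rewrite /upd; case: (eqVneq v n) => [_|ne] //.
by apply: fr; apply: hq => // E; move: ne; rewrite E eqxx.
Qed.

Lemma main f : forall U1 U2 e1 e2 P, Inv U1 U2 e1 e2 P f -> sat U1 e1 f -> sat U2 e2 f.
Proof.
elim: f => [t1 t2| |g IH|g IHg h IHh|g IHg h IHh|g IHg h IHh|n g IH|n g IH]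
  U1 U2 e1 e2 P I /=.
- case: I => [c [[k1 k2] [fr _]]] E.
  have h1 := teval_in c k1 (fun v hv => fr v (or_introl hv)).
  have h2 := teval_in c k2 (fun v hv => fr v (or_intror hv)).
  exact: (c_fun c h1 h2 E).
- by [].
- move=> ns s2; apply: ns; exact: (IH _ _ _ _ _ (Inv_sw I) s2).
- have [c [[kg kh] _]] := I.
  have Ig : Inv U1 U2 e1 e2 P g by apply: (Inv_mono I kg) => [v ?|]; [left|apply: leq_maxl].
  have Ih : Inv U1 U2 e1 e2 P h by apply: (Inv_mono I kh) => [v ?|]; [right|apply: leq_maxr].
  by case=> s1 s2; split; [apply: (IHg _ _ _ _ _ Ig)|apply: (IHh _ _ _ _ _ Ih)].
- have [c [[kg kh] _]] := I.
  have Ig : Inv U1 U2 e1 e2 P g by apply: (Inv_mono I kg) => [v ?|]; [left|apply: leq_maxl].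
  have Ih : Inv U1 U2 e1 e2 P h by apply: (Inv_mono I kh) => [v ?|]; [right|apply: leq_maxr].
  by case=> s; [left; apply: (IHg _ _ _ _ _ Ig)|right; apply: (IHh _ _ _ _ _ Ih)].
- have [c [[kg kh] _]] := I.
  have Ig : Inv U1 U2 e1 e2 P g by apply: (Inv_mono I kg) => [v ?|]; [left|apply: leq_maxl].
  have Ih : Inv U1 U2 e1 e2 P h by apply: (Inv_mono I kh) => [v ?|]; [right|apply: leq_maxr].
  move=> H s2; apply: (IHh _ _ _ _ _ Ih); apply: H.
  exact: (IHg _ _ _ _ _ (Inv_sw Ig) s2).
- move=> H y hy.
  have [c [k [fr [r1 r2]]]] := Inv_sw I.
  have [x [P' [hx [c' [r2' [r1' [hyx sub]]]]]]] := ext c r1 r2 hy.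
  apply: (IH _ _ _ _ (sw P')); last exact: H x hx.
  split; first exact: core_sw.
  split; first by apply: consts_mono k => z hz; rewrite mem_sw; apply: sub.
  split.
    move=> v hv; rewrite mem_sw /=.
    apply: (upd_in (Q := fun n g => FAll n g)) hyx _ _ hv.
      by move=> w hw; apply: sub; apply: fr.
    by move=> w hw ne; split => // E; apply: ne.
  by split; apply: room_sw.
- case=> x [hx s1].
  have [c [k [fr [r1 r2]]]] := I.
  have [x' [P' [hx' [c' [r1' [r2' [hxx sub]]]]]]] := ext c r1 r2 hx.
  exists x'; split => //; apply: (IH _ _ _ _ P') s1.
  split => //.
  split; first by apply: consts_mono k => z hz; apply: sub.
  split => //.
  move=> v hv.
  apply: (upd_in (Q := fun n g => FEx n g)) hxx _ _ hv.
    by move=> w hw; apply: sub; apply: fr.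
  by move=> w hw ne; split => // E; apply: ne.
Qed.


Definition Dcore (P : seq (S * S)) :=
  core (fun _ => True) (fun _ => True) P /\ forall a, a \in P -> a.1 = a.2.

Definition DSet (P : seq (S * S)) : S -> Prop := fun y => (y, y) \in P.

Lemma subT : subgroupP (fun _ : S => True).
Proof. by split => //; split. Qed.

Lemma Dcore0 : Dcore [:: (0, 0)].
Proof.
split; last by move=> a; rewrite mem_seq1 => /eqP ->.
constructor; try exact: subT => //.
- by [].
- by rewrite mem_seq1.
- by move=> a b; rewrite !mem_seq1 => /eqP -> /eqP ->; rewrite /= addr0.
- by move=> a b; rewrite !mem_seq1 => /eqP -> /eqP ->.
- by move=> a b; rewrite !mem_seq1 => /eqP -> /eqP ->.
- by [].
Qed.

Lemma grow1 P : Dcore P -> exists P', Dcore P' /\ size P' = (size P * p)%N /\ {subset P <= P'}.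
Proof.
move=> [c d].
have [x nx] : exists x, forall b, (x, b) \notin P.
  apply: NNPP => H; apply: hinf; exists [seq a.1 | a <- P] => y _; apply/In_mem.
  apply/mapP; apply: NNPP => nm; apply: H; exists y => b; apply/negP => hb.
  by apply: nm; exists (y, b).
have nx' : forall a, (a, x) \notin P.
  move=> a; apply/negP => ha; have /= E := d _ ha; subst a; by move: (nx x); rewrite ha.
exists (span P x x); split; last by split; [exact: span_size|exact: span_sub c].
split; first exact: span_core.
move=> u /allpairsP [[a k] [/= ha _ ->]] /=; by rewrite (d _ ha).
Qed.

Lemma growN q P : Dcore P -> exists P', Dcore P' /\ size P' = (size P * p ^ q)%N /\ {subset P <= P'}.
Proof.
elim: q P => [|q IH] P dP; first by exists P; rewrite expn0 muln1; split => //; split.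
have [P1 [d1 [s1 sub1]]] := grow1 dP.
have [P2 [d2 [s2 sub2]]] := IH _ d1.
exists P2; split => //; split; first by rewrite s2 s1 expnS mulnA.
by move=> a /sub1 /sub2.
Qed.

Lemma addc P x : Dcore P -> exists P', Dcore P' /\ (x, x) \in P' /\ {subset P <= P'}.
Proof.
move=> dP; have [c d] := dP.
case: (classic ((x, x) \in P)) => [hx|nxx]; first by exists P; split => //; split.
have nx : forall b, (x, b) \notin P.
  by move=> b; apply/negP => hb; have /= E := d _ hb; subst b.
have nx' : forall a, (a, x) \notin P.
  by move=> a; apply/negP => ha; have /= E := d _ ha; subst a.
exists (span P x x); split; last by split; [exact: span_x c|exact: span_sub c].
split; first exact: span_core.
move=> u /allpairsP [[a k] [/= ha _ ->]] /=; by rewrite (d _ ha).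
Qed.

Lemma addl (l : seq S) : exists P, Dcore P /\ forall c, c \in l -> (c, c) \in P.
Proof.
elim: l => [|x l [P [dP hP]]]; first by exists [:: (0, 0)]; split => //; exact: Dcore0.
have [P' [d' [hx sub]]] := addc x dP.
exists P'; split => // y; rewrite inE => /orP [/eqP ->|/hP]; [exact: hx|exact: sub].
Qed.

Lemma DSet_finsub P : Dcore P -> finsub (DSet P).
Proof.
move=> [c d]; split.
  split; first exact: (c_zero c).
  split; first by move=> x y hx hy; apply: (c_add c hx hy).
  by move=> x hx; apply: (core_neg c hx).
exists [seq a.1 | a <- P] => y hy; apply/In_mem; apply/mapP; by exists (y, y).
Qed.

Fixpoint tcs (t : term S) : seq S :=
  match t with
  | TConst g => [:: g]
  | TAdd t1 t2 => tcs t1 ++ tcs t2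
  | TNeg t1 => tcs t1
  | _ => [::]
  end.

Fixpoint fcs (f : formula S) : seq S :=
  match f with
  | FEq t1 t2 => tcs t1 ++ tcs t2
  | FBot => [::]
  | FNot g => fcs g
  | FAnd g h => fcs g ++ fcs h
  | FOr g h => fcs g ++ fcs h
  | FImp g h => fcs g ++ fcs h
  | FAll _ g => fcs g
  | FEx _ g => fcs g
  end.

Lemma tconsts_of (K : S -> Prop) t : (forall c, c \in tcs t -> K c) -> tconsts_in K t.
Proof.
elim: t => [n|g||t1 IH1 t2 IH2|t IH] h //=.
- by apply: h; rewrite mem_seq1.
- by split; [apply: IH1|apply: IH2] => c hc; apply: h; rewrite mem_cat hc ?orbT.
- exact: IH.
Qed.

Lemma consts_of (K : S -> Prop) f : (forall c, c \in fcs f -> K c) -> consts_in K f.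
Proof.
elim: f => //= [t1 t2|g IHg h' IHh|g IHg h' IHh|g IHg h' IHh] h;
  try by split; [apply: tconsts_of|apply: tconsts_of] => c hc; apply: h; rewrite mem_cat hc ?orbT.
all: try by split; [apply: IHg|apply: IHh] => c hc; apply: h; rewrite mem_cat hc ?orbT.
Qed.

Lemma transfer f P0 PA (B : S -> Prop) : sentence f -> Dcore P0 -> Dcore PA ->
  {subset P0 <= PA} -> (size P0 * p ^ qd f <= size PA)%N ->
  consts_in (fun c => (c, c) \in P0) f -> finsub B -> Defs.incl (DSet PA) B ->
  (sat B (fun _ => 0) f <-> sat (fun _ : S => True) (fun _ => 0) f).
Proof.
move=> sf [c0 d0] [cA dA] sub sz k [sB _] iB.
have dPA : forall a, a \in PA -> (a.1, a.1) \in PA.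
  by move=> [x y] ha; have /= E := dA _ ha; subst y.
have cB : core B (fun _ => True) P0.
  case: c0 => _ _ u z ad fu ij _; constructor => //.
  by move=> a ha; split => //; apply: iB; apply: dPA; apply: sub.
have I : Inv B (fun _ => True) (fun _ => 0) (fun _ => 0) P0 f.
  split => //; split => //; split; first by move=> v hv; case: (sf v hv).
  split; last by right.
  left; exists [seq a.1 | a <- PA]; split.
    rewrite map_inj_in_uniq; first exact: c_uniq cA.
    move=> [x1 y1] [x2 y2] h1 h2 /= E; subst x2.
    by have /= -> := c_fun cA h1 h2 erefl.
  split; last by rewrite size_map.
  by move=> y /mapP [a ha ->]; apply: iB; apply: dPA.
split; first exact: main I.
exact: main (Inv_sw I).
Qed.

Lemma Th_liminf f : Th (fun _ : S => True) f -> liminf_I (@Th S) f.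
Proof.
move=> [sf [_ st]].
have [P0 [d0 h0]] := addl (fcs f).
have [PA [dA [sA subA]]] := growN (qd f) d0.
exists (DSet PA); split; first exact: DSet_finsub.
move=> B fB iB; split => //.
have k : consts_in (fun c => (c, c) \in P0) f by apply: consts_of.
split; first by apply: consts_mono k => x hx; apply: iB; apply: subA.
by apply/(transfer sf d0 dA subA _ k fB iB) => //; rewrite sA.
Qed.

Lemma ub (A A' : S -> Prop) : finsub A -> finsub A' ->
  exists B, finsub B /\ Defs.incl A B /\ Defs.incl A' B.
Proof.
move=> [_ [l hl]] [_ [l' hl']].
have [P [dP hP]] := addl (l ++ l').
exists (DSet P); split; first exact: DSet_finsub.
split => x hx; apply: hP; rewrite mem_cat; apply/orP.
  by left; apply/In_mem; apply: hl.
by right; apply/In_mem; apply: hl'.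
Qed.

Lemma liminf_limsup f : liminf_I (@Th S) f -> limsup_I (@Th S) f.
Proof.
move=> [A0 [f0 h0]] A fA.
have [B [fB [iA iA0]]] := ub fA f0.
by exists B; split => //; split => //; apply: h0.
Qed.

Lemma limsup_Th f : limsup_I (@Th S) f -> Th (fun _ : S => True) f.
Proof.
move=> H.
have [P0 [d0 h0]] := addl (fcs f).
have [PA [dA [sA subA]]] := growN (qd f) d0.
have [B [fB [iB [sf [kB sB]]]]] := H _ (DSet_finsub dA).
split => //; split; first by apply: consts_mono kB.
have k : consts_in (fun c => (c, c) \in P0) f by apply: consts_of.
by apply/(transfer sf d0 dA subA _ k fB iB) => //; rewrite sA.
Qed.

Lemma final :
  (forall f : formula S, limsup_I (@Th S) f <-> Th (fun _ : S => True) f) /\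
  (forall f : formula S, liminf_I (@Th S) f <-> Th (fun _ : S => True) f).
Proof.
split => f; split.
- exact: limsup_Th.
- by move=> /Th_liminf /liminf_limsup.
- by move=> /liminf_limsup /limsup_Th.
- exact: Th_liminf.
Qed.

End Main.

Theorem mainTheorem12 (p : nat) (S : zmodType)
  (hp : prime p)
  (hexp : forall g : S, g *+ p = 0)
  (hinf : ~ finiteP (fun _ : S => True)) :
  (forall f : formula S, limsup_I (@Th S) f <-> Th (fun _ : S => True) f) /\
  (forall f : formula S, liminf_I (@Th S) f <-> Th (fun _ : S => True) f).
Proof. exact: (final hp hexp hinf). Qed.
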